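(* For every integer $n\ge1$, $\Omega'_n=\Omega_n$.
   Context: $V_n=\{(v_0,v_1,v_2)\in\mathbb{Z}^3: 0\le v_0\le v_1\le 1,\ v_1\le v_2\le n+1\}$, elements written as words $v_0v_1v_2$. A Wang tile is $t=(a,b,c,d)$ with $\mathrm{RIGHT}(t)=a$, $\mathrm{TOP}(t)=b$, $\mathrm{LEFT}(t)=c$, $\mathrm{BOTTOM}(t)=d$; $\hat t=(b,a,d,c)$, $\hat S=\{\hat t:t\in S\}$. Define (as (right, top, left, bottom)): $W_n=\{(11(i+1),11(j+1),11i,11j):1\le i,j\le n\}$; $b_n^i=(00(i+1),111,00i,11n)$, $B'_n=\{b_n^i:0\le i\le n\}$, $B_n=\{b_n^i:0\le i\le n-1\}$; $G_n=\{(01(i+1),111,00i,11(n+1)):0\le i\le n\}$; $Y_n=\{(01(i+1),112,01i,11(n+1)):1\le i\le n\}$; $A_n=\{(00(i+1),112,01i,11n):1\le i\le n\}$; $j_n^{k,l,r,s}=((0,k,l),(0,r,s),(0,s,r+n),(0,l,k+n))$ for $(k,l),(r,s)\in\{(0,0),(0,1),(1,1)\}$; $J'_n$ is the set of these 9 tiles and $J_n=J'_n\setminus\{j_n^{0,0,1,1},j_n^{1,1,0,0}\}$. $\mathcal T'_n=W_n\cup B'_n\cup G_n\cup Y_n\cup A_n\cup\hat B'_n\cup\hat G_n\cup\hat Y_n\cup\hat A_n\cup J'_n$ and $\mathcal T_n=W_n\cup B_n\cup G_n\cup Y_n\cup\hat B_n\cup\hat G_n\cup\hat Y_n\cup J_n$.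 $\Omega'_n$ (resp. $\Omega_n$) is the set of configurations $x:\mathbb Z^2\to\mathcal T'_n$ (resp. $\mathcal T_n$) with $\mathrm{RIGHT}(x(\mathbf m))=\mathrm{LEFT}(x(\mathbf m+\mathbf e_1))$ and $\mathrm{TOP}(x(\mathbf m))=\mathrm{BOTTOM}(x(\mathbf m+\mathbf e_2))$ for all $\mathbf m\in\mathbb Z^2$. *)

(* Defs.v *)
From Stdlib Require Import ZArith Lia.
Open Scope Z_scope.

(* A color is a word v0 v1 v2, encoded as the triple (v0, v1, v2). *)
Definition color := (Z * Z * Z)%type.
Definition col (a b c : Z) : color := (a, b, c).

Definition V (n : Z) (v : color) : Prop :=
  let '(v0, v1, v2) := v in 0 <= v0 <= v1 /\ v1 <= 1 /\ v1 <= v2 <= n + 1.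

Definition tile := (color * color * color * color)%type.
Definition mk_tile (a b c d : color) : tile := (a, b, c, d).
Definition RIGHT (t : tile) : color := let '(a, _, _, _) := t in a.
Definition TOP (t : tile) : color := let '(_, b, _, _) := t in b.
Definition LEFT (t : tile) : color := let '(_, _, c, _) := t in c.
Definition BOTTOM (t : tile) : color := let '(_, _, _, d) := t in d.

Definition hat (t : tile) : tile := let '(a, b, c, d) := t in (b, a, d, c).

Definition tileset := tile -> Prop.
Definition hatS (S : tileset) : tileset := fun t => exists s, S s /\ t = hat s.
Definition unionS (S1 S2 : tileset) : tileset := fun t => S1 t \/ S2 t.

Definition W_ (n : Z) : tileset := fun t => exists i j, 1 <= i <= n /\ 1 <= j <= n /\
  t = mk_tile (col 1 1 (i+1)) (col 1 1 (j+1)) (col 1 1 i) (col 1 1 j).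

Definition b_tile (n i : Z) : tile :=
  mk_tile (col 0 0 (i+1)) (col 1 1 1) (col 0 0 i) (col 1 1 n).
Definition B'_ (n : Z) : tileset := fun t => exists i, 0 <= i <= n /\ t = b_tile n i.
Definition B_ (n : Z) : tileset := fun t => exists i, 0 <= i <= n - 1 /\ t = b_tile n i.

Definition G_ (n : Z) : tileset := fun t => exists i, 0 <= i <= n /\
  t = mk_tile (col 0 1 (i+1)) (col 1 1 1) (col 0 0 i) (col 1 1 (n+1)).
Definition Y_ (n : Z) : tileset := fun t => exists i, 1 <= i <= n /\
  t = mk_tile (col 0 1 (i+1)) (col 1 1 2) (col 0 1 i) (col 1 1 (n+1)).
Definition A_ (n : Z) : tileset := fun t => exists i, 1 <= i <= n /\
  t = mk_tile (col 0 0 (i+1)) (col 1 1 2) (col 0 1 i) (col 1 1 n).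

Definition kl_ok (k l : Z) : Prop := (k = 0 /\ l = 0) \/ (k = 0 /\ l = 1) \/ (k = 1 /\ l = 1).

Definition j_tile (n k l r s : Z) : tile :=
  mk_tile (col 0 k l) (col 0 r s) (col 0 s (r + n)) (col 0 l (k + n)).
Definition J'_ (n : Z) : tileset := fun t => exists k l r s,
  kl_ok k l /\ kl_ok r s /\ t = j_tile n k l r s.
Definition J_ (n : Z) : tileset := fun t => exists k l r s,
  kl_ok k l /\ kl_ok r s /\ t = j_tile n k l r s /\
  t <> j_tile n 0 0 1 1 /\ t <> j_tile n 1 1 0 0.

Definition T'_ (n : Z) : tileset := fun t =>
  W_ n t \/ B'_ n t \/ G_ n t \/ Y_ n t \/ A_ n t \/
  hatS (B'_ n) t \/ hatS (G_ n) t \/ hatS (Y_ n) t \/ hatS (A_ n) t \/ J'_ n t.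
Definition T_ (n : Z) : tileset := fun t =>
  W_ n t \/ B_ n t \/ G_ n t \/ Y_ n t \/
  hatS (B_ n) t \/ hatS (G_ n) t \/ hatS (Y_ n) t \/ J_ n t.

Definition configuration := (Z * Z) -> tile.
Definition Omega (S : tileset) (x : configuration) : Prop :=
  (forall m, S (x m)) /\
  (forall m1 m2, RIGHT (x (m1, m2)) = LEFT (x (m1 + 1, m2))) /\
  (forall m1 m2, TOP (x (m1, m2)) = BOTTOM (x (m1, m2 + 1))).

(* Main.v *)
Require Import Defs.
From Stdlib Require Import ZArith Lia.
Open Scope Z_scope.

Definition c0 (c:color) : Z := let '(a,_,_) := c in a.
Definition c1 (c:color) : Z := let '(_,b,_) := c in b.
Definition c2 (c:color) : Z := let '(_,_,d) := c in d.

Ltac inj := repeat match goal with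
 | H : (_, _) = (_, _) |- _ => injection H; clear H; intros
 end.

Ltac simp := unfold b_tile, j_tile, mk_tile, col in *; cbn [RIGHT LEFT TOP BOTTOM hat c0 c1 c2 fst snd] in *.

Ltac classify H E :=
  unfold T'_ in H;
  destruct H as [H|[H|[H|[H|[H|[H|[H|[H|[H|H]]]]]]]]];
  [ unfold W_ in H; destruct H as (?i & ?j & ?Hi & ?Hj & E)
  | unfold B'_ in H; destruct H as (?i & ?Hi & E)
  | unfold G_ in H; destruct H as (?i & ?Hi & E)
  | unfold Y_ in H; destruct H as (?i & ?Hi & E)
  | unfold A_ in H; destruct H as (?i & ?Hi & E)
  | unfold hatS, B'_ in H; destruct H as (?s & (?i & ?Hi & ->) & E)
  | unfold hatS, G_ in H; destruct H as (?s & (?i & ?Hi & ->) & E)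
  | unfold hatS, Y_ in H; destruct H as (?s & (?i & ?Hi & ->) & E)
  | unfold hatS, A_ in H; destruct H as (?s & (?i & ?Hi & ->) & E)
  | unfold J'_, kl_ok in H; destruct H as (?k & ?l & ?r & ?s & ?Hkl & ?Hrs & E);
    destruct Hkl as [[-> ->]|[[-> ->]|[-> ->]]];
    destruct Hrs as [[-> ->]|[[-> ->]|[-> ->]]] ];
  try rewrite E in *; simp; inj; try lia.

Lemma tile_v0 n t : T'_ n t -> c0 (TOP t) = c0 (BOTTOM t).
Proof. intro H. classify H E; subst; simp; lia. Qed.

Lemma lem1 n x (HO : Omega (T'_ n) x) : forall k:nat, forall X Y,
  c0 (BOTTOM (x (X,Y))) = 0 -> c2 (BOTTOM (x (X,Y))) = Z.of_nat k + 2 ->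
  c0 (BOTTOM (x (X+1,Y))) = 1 -> c2 (BOTTOM (x (X+1,Y))) = Z.of_nat k + 1 -> False.
Proof.
  destruct HO as (Hs & Hh & Hv).
  induction k; intros X Y A1 A2 A3 A4;
   pose proof (Hv X (Y-1)) as V1; pose proof (Hv (X+1) (Y-1)) as V2;
   replace (Y-1+1) with Y in V1, V2 by lia;
   pose proof (Hh X (Y-1)) as H1;
   rewrite <- V1 in A1, A2; rewrite <- V2 in A3, A4;
   pose proof (Hs (X,Y-1)) as T1; pose proof (Hs (X+1,Y-1)) as T2;
   classify T1 E1; classify T2 E2.
  all: apply (IHk X (Y-1)); rewrite ?E1, ?E2; simp; lia.
Qed.

Lemma lem3 n x (HO : Omega (T'_ n) x) : forall k:nat, forall X Y,
  c0 (BOTTOM (x (X,Y))) = 1 -> c2 (BOTTOM (x (X,Y))) = Z.of_nat k + 1 ->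
  c0 (BOTTOM (x (X+1,Y))) = 0 -> c2 (BOTTOM (x (X+1,Y))) = Z.of_nat k + 2 -> False.
Proof.
  destruct HO as (Hs & Hh & Hv).
  induction k; intros X Y A1 A2 A3 A4;
   pose proof (Hv X (Y-1)) as V1; pose proof (Hv (X+1) (Y-1)) as V2;
   replace (Y-1+1) with Y in V1, V2 by lia;
   pose proof (Hh X (Y-1)) as H1;
   rewrite <- V1 in A1, A2; rewrite <- V2 in A3, A4;
   pose proof (Hs (X,Y-1)) as T1; pose proof (Hs (X+1,Y-1)) as T2;
   classify T1 E1; classify T2 E2.
  all: apply (IHk X (Y-1)); rewrite ?E1, ?E2; simp; lia.
Qed.

Definition isA (t : tile) := c0 (LEFT t) = 0 /\ c1 (LEFT t) = 1 /\ c1 (RIGHT t) = 0 /\ c0 (BOTTOM t) = 1.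

Lemma lem2 n x (HO : Omega (T'_ n) x) : forall k:nat, forall X Y,
  c0 (BOTTOM (x (X,Y))) = 1 -> c2 (BOTTOM (x (X,Y))) = Z.of_nat k + 2 ->
  c0 (BOTTOM (x (X+1,Y))) = 1 -> c2 (BOTTOM (x (X+1,Y))) = Z.of_nat k + 1 ->
  exists Y', isA (x (X,Y')).
Proof.
  destruct HO as (Hs & Hh & Hv).
  induction k; intros X Y A1 A2 A3 A4;
   pose proof (Hv X (Y-1)) as V1; pose proof (Hv (X+1) (Y-1)) as V2;
   replace (Y-1+1) with Y in V1, V2 by lia;
   pose proof (Hh X (Y-1)) as H1;
   rewrite <- V1 in A1, A2; rewrite <- V2 in A3, A4;
   pose proof (Hs (X,Y-1)) as T1; pose proof (Hs (X+1,Y-1)) as T2;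
   classify T1 E1; classify T2 E2.
  all: first [ exists (Y-1); unfold isA; rewrite E1; simp; lia
             | apply (IHk X (Y-1)); rewrite ?E1, ?E2; simp; lia ].
Qed.

Lemma colconst_aux n x (HO : Omega (T'_ n) x) X : forall k:nat, forall Y,
  c0 (BOTTOM (x (X, Y + Z.of_nat k))) = c0 (BOTTOM (x (X,Y))).
Proof.
  destruct HO as (Hs & Hh & Hv).
  induction k; intro Y.
  - replace (Y + Z.of_nat 0) with Y by lia. reflexivity.
  - replace (Y + Z.of_nat (S k)) with (Y + Z.of_nat k + 1) by lia.
    rewrite <- Hv, (tile_v0 n), IHk. reflexivity. apply Hs.
Qed.

Lemma colconst n x (HO : Omega (T'_ n) x) X Y Y' :
  c0 (BOTTOM (x (X, Y'))) = c0 (BOTTOM (x (X,Y))).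
Proof.
  destruct (Z_le_gt_dec Y Y').
  - replace Y' with (Y + Z.of_nat (Z.to_nat (Y' - Y))) by lia. apply (colconst_aux n x HO).
  - replace Y with (Y' + Z.of_nat (Z.to_nat (Y - Y'))) by lia. symmetry. apply (colconst_aux n x HO).
Qed.

Lemma Jexists n x (HO : Omega (T'_ n) x) : forall t:nat, forall X Y,
  c0 (LEFT (x (X,Y))) = 0 -> c2 (LEFT (x (X,Y))) <= Z.of_nat t ->
  exists X0, X0 < X /\ c0 (BOTTOM (x (X0,Y))) = 0.
Proof.
  pose proof HO as HO'.
  destruct HO as (Hs & Hh & Hv).
  induction t; intros X Y A1 A2;
   pose proof (Hh (X-1) Y) as H1; replace (X-1+1) with X in H1 by lia;
   rewrite <- H1 in A1, A2;
   pose proof (Hs (X-1,Y)) as T1; classify T1 E1.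
  all: first [ exists (X-1); split; [lia | rewrite E1; simp; lia]
             | destruct (IHt (X-1) Y) as (X0 & ? & ?); [rewrite E1; simp; lia | rewrite E1; simp; lia | exists X0; split; [lia|assumption]] ].
Qed.

Lemma A_dead n x (hn : 1 <= n) (HO : Omega (T'_ n) x) : forall d:nat, forall X0 X Y,
  X = X0 + Z.of_nat d + 1 -> (forall Y', c0 (BOTTOM (x (X0,Y'))) = 0) -> isA (x (X,Y)) -> False.
Proof.
  pose proof HO as HO'.
  destruct HO as (Hs & Hh & Hv).
  induction d; intros X0 X Y EX HC HA;
   pose proof (Hs (X,Y)) as T0; unfold isA in HA; destruct HA as (HA1 & HA2 & HA3 & HA4);
   classify T0 E0;
   pose proof (Hh (X-1) Y) as H1; replace (X-1+1) with X in H1 by lia;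
   rewrite E0 in H1; simp;
   pose proof (Hs (X-1,Y)) as T1; classify T1 E1.
  all: try (apply (lem1 n x HO' (Z.to_nat (n-1)) (X-1) Y); replace (X-1+1) with X by lia; rewrite ?E0, ?E1; simp; lia).
  all: try (specialize (HC Y); replace X0 with (X-1) in HC by lia; rewrite E1 in HC; simp; lia).
  all: destruct (lem2 n x HO' (Z.to_nat (n-1)) (X-1) Y) as (Y' & HY');
      [ rewrite ?E0, ?E1; simp; lia | rewrite ?E0, ?E1; simp; lia 
      | replace (X-1+1) with X by lia; rewrite ?E0, ?E1; simp; lia
      | replace (X-1+1) with X by lia; rewrite ?E0, ?E1; simp; lia
      | apply (IHd X0 (X-1) Y'); [lia | exact HC | exact HY'] ].
Qed.

Lemma A_never n x (hn : 1 <= n) (HO : Omega (T'_ n) x) X Y : isA (x (X,Y)) -> False.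
Proof.
  intro HA. pose proof HA as (HA1 & HA2 & HA3 & HA4).
  destruct (Jexists n x HO (Z.to_nat (c2 (LEFT (x (X,Y))))) X Y HA1 ltac:(lia)) as (X0 & HX0 & HB).
  apply (A_dead n x hn HO (Z.to_nat (X - X0 - 1)) X0 X Y); [lia| |exact HA].
  intro Y'. rewrite (colconst n x HO X0 Y Y'). exact HB.
Qed.

Lemma bn_never n x (HO : Omega (T'_ n) x) X Y :
  c0 (RIGHT (x (X,Y))) = 0 -> c1 (RIGHT (x (X,Y))) = 0 -> c2 (RIGHT (x (X,Y))) = n + 1 -> False.
Proof.
  destruct HO as (Hs & Hh & Hv). intros A1 A2 A3.
  rewrite Hh in A1, A2, A3.
  pose proof (Hs (X+1,Y)) as T1; classify T1 E1.
Qed.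

Lemma j_never n x (hn : 1 <= n) (HO : Omega (T'_ n) x) X Y :
  c0 (RIGHT (x (X,Y))) = 0 -> c1 (RIGHT (x (X,Y))) = 1 -> c2 (RIGHT (x (X,Y))) = 1 ->
  c0 (LEFT (x (X,Y))) = 0 -> c1 (LEFT (x (X,Y))) = 0 -> c2 (LEFT (x (X,Y))) = n ->
  c0 (BOTTOM (x (X,Y))) = 0 -> c1 (BOTTOM (x (X,Y))) = 1 -> c2 (BOTTOM (x (X,Y))) = n + 1 ->
  False.
Proof.
  pose proof HO as HO'.
  destruct HO as (Hs & Hh & Hv). intros A1 A2 A3 A4 A5 A6 A7 A8 A9.
  pose proof (Hh (X-1) Y) as H1; replace (X-1+1) with X in H1 by lia.
  rewrite <- H1 in A4, A5, A6.
  pose proof (Hs (X-1,Y)) as T1; classify T1 E1.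
  all: try (apply (lem3 n x HO' (Z.to_nat (n-1)) (X-1) Y); replace (X-1+1) with X by lia; rewrite ?E1; simp; lia).
  all: pose proof (Hv X (Y-1)) as V1; pose proof (Hv (X-1) (Y-1)) as V2;
   replace (Y-1+1) with Y in V1, V2 by lia;
   pose proof (Hh (X-1) (Y-1)) as H2; replace (X-1+1) with X in H2 by lia;
   rewrite <- V1 in A7, A8, A9; rewrite E1 in V2;
   pose proof (Hs (X,Y-1)) as T2; pose proof (Hs (X-1,Y-1)) as T3;
   classify T2 E2; classify T3 E3.
Qed.

Definition xt (x : configuration) : configuration := fun m => hat (x (snd m, fst m)).

Ltac memW := unfold W_; do 2 eexists; split; [|split; [|reflexivity]]; lia.
Ltac mem1 := eexists; split; [|reflexivity]; lia.
Ltac memhat tac := match goal with |- hatS _ ?t =>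
   exists (hat t); split; [ cbn [hat]; tac | cbn [hat]; reflexivity ] end.
Ltac memJ' := unfold J'_; do 4 eexists; split; [|split; [|reflexivity]]; unfold kl_ok; lia.
Ltac memT' := unfold T'_; first
  [ left; memW
  | right; left; unfold B'_; mem1
  | do 2 right; left; unfold G_; mem1
  | do 3 right; left; unfold Y_; mem1
  | do 4 right; left; unfold A_; mem1
  | do 5 right; left; memhat ltac:(unfold B'_; mem1)
  | do 6 right; left; memhat ltac:(unfold G_; mem1)
  | do 7 right; left; memhat ltac:(unfold Y_; mem1)
  | do 8 right; left; memhat ltac:(unfold A_; mem1)
  | do 9 right; memJ' ].

Lemma T'_hat n t : T'_ n t -> T'_ n (hat t).
Proof. intro H. classify H E; subst; cbn [hat]; memT'. Qed.

Lemma transp n x : Omega (T'_ n) x -> Omega (T'_ n) (xt x).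
Proof.
  intros (Hs & Hh & Hv). unfold xt. split; [|split].
  - intro m. apply T'_hat. apply Hs.
  - intros m1 m2. cbn [fst snd].
    destruct (x (m2, m1)) as [[[a b] c] d] eqn:E1.
    destruct (x (m2, m1+1)) as [[[a' b'] c'] d'] eqn:E2.
    pose proof (Hv m2 m1) as V. rewrite E1, E2 in V. cbn in V |- *. exact V.
  - intros m1 m2. cbn [fst snd].
    destruct (x (m2, m1)) as [[[a b] c] d] eqn:E1.
    destruct (x (m2+1, m1)) as [[[a' b'] c'] d'] eqn:E2.
    pose proof (Hh m2 m1) as V. rewrite E1, E2 in V. cbn in V |- *. exact V.
Qed.

Ltac memJ := unfold J_; do 4 eexists;
  split; [|split; [|split; [reflexivity| split; intro HH; simp; inj; lia]]]; unfold kl_ok; lia.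
Ltac memT := unfold T_; first
  [ left; memW
  | right; left; unfold B_; mem1
  | do 2 right; left; unfold G_; mem1
  | do 3 right; left; unfold Y_; mem1
  | do 4 right; left; memhat ltac:(unfold B_; mem1)
  | do 5 right; left; memhat ltac:(unfold G_; mem1)
  | do 6 right; left; memhat ltac:(unfold Y_; mem1)
  | do 7 right; memJ ].

Lemma T_sub n t : T_ n t -> T'_ n t.
Proof.
  intro H; unfold T_ in H; unfold T'_.
  destruct H as [H|[H|[H|[H|[H|[H|[H|H]]]]]]].
  - left; exact H.
  - right; left; destruct H as (i & Hi & E); exists i; split; [lia|exact E].
  - do 2 right; left; exact H.
  - do 3 right; left; exact H.
  - do 5 right; left; destruct H as (s & (i & Hi & E) & E'); exists s; split; [exists i; split; [lia|exact E] | exact E'].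
  - do 6 right; left; exact H.
  - do 7 right; left; exact H.
  - do 9 right; destruct H as (k&l&r&s&H1&H2&H3&_); exists k, l, r, s; auto.
Qed.

Theorem proposition7p4 (n : Z) (hn : 1 <= n) :
  forall x : configuration, Omega (T'_ n) x <-> Omega (T_ n) x.
Proof.
  intro x; split.
  - intro HO. pose proof HO as HO'. pose proof (transp n x HO) as HT.
    destruct HO as (Hs & Hh & Hv). split; [|split; assumption].
    intros [X Y]. pose proof (Hs (X,Y)) as T0.
    classify T0 E0.
    all: try match goal with Hi : 0 <= ?i <= ?m |- _ => destruct (Z_lt_le_dec i m) end.
    all: first
      [ memT
      | exfalso; apply (A_never n x hn HO' X Y); unfold isA; rewrite E0; simp; lia
      | exfalso; apply (A_never n (xt x) hn HT Y X); unfold isA, xt; cbn [fst snd]; rewrite E0; simp; lia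
      | exfalso; apply (bn_never n x HO' X Y); rewrite E0; simp; lia
      | exfalso; apply (bn_never n (xt x) HT Y X); unfold xt; cbn [fst snd]; rewrite E0; simp; lia
      | exfalso; apply (j_never n x hn HO' X Y); rewrite E0; simp; lia
      | exfalso; apply (j_never n (xt x) hn HT Y X); unfold xt; cbn [fst snd]; rewrite E0; simp; lia ].
  - intros (Hs & Hh & Hv). split; [|split; assumption].
    intro m. apply T_sub, Hs.
Qed.
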